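(* Let $f\colon X\to X$ be a homeomorphism of a compact metric space with the L-shadowing property and let $C$ be a chain recurrent class of $f$. Then there exist $n\ge1$ and pairwise disjoint compact sets $C_1,\dots,C_n\subset C$, each $f^n$-invariant, such that $C=\bigcup_{i=1}^n C_i$, $f(C_i)=C_{(i+1)\bmod n}$, and for each $i$ the restriction $f^n|_{C_i}$ is topologically mixing and has the two-sided limit shadowing property.
   Context: L-shadowing: for every $\varepsilon>0$ there is $\delta>0$ such that every sequence $(x_k)_{k\in\mathbb{Z}}$ with $d(f(x_k),x_{k+1})\le\delta$ for all $k$ and $d(f(x_k),x_{k+1})\to0$ as $|k|\to\infty$ admits $z$ with $d(f^k(z),x_k)\le\varepsilon$ for all $k$ and $d(f^k(z),x_k)\to0$ as $|k|\to\infty$. A $\varepsilon$-pseudo orbit is a sequence with $d(f(x_k),x_{k+1})<\varepsilon$; the chain recurrent class of $x$ is the set of $y$ such that for every $\varepsilon>0$ there is a periodic $\varepsilon$-pseudo orbit containing $x$ and $y$. A homeomorphism $g$ of a compact metric space $Y$ has the two-sided limit shadowing property if for every sequence $(y_k)_{k\in\mathbb{Z}}$ with $d(g(y_k),y_{k+1})\to0$ as $|k|\to\infty$ there is $y\in Y$ with $d(g^k(y),y_k)\to0$ as $|k|\to\infty$. Topologically mixing: for all nonempty open $U,V$ there is $N$ with $g^k(U)\cap V\ne\emptyset$ for all $k\ge N$. *)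

(* Defs.v *)
From Stdlib Require Export Reals ZArith.
Open Scope R_scope.

Section MetricDefs.
Context {X : Type} (d : X -> X -> R).

Definition is_metric : Prop :=
  (forall x y, 0 <= d x y) /\
  (forall x y, d x y = 0 <-> x = y) /\
  (forall x y, d x y = d y x) /\
  (forall x y z, d x z <= d x y + d y z).

Definition open_set (U : X -> Prop) : Prop :=
  forall x, U x -> exists eps, 0 < eps /\ forall y, d x y < eps -> U y.

Definition compact_set (K : X -> Prop) : Prop :=
  forall (I : Type) (U : I -> X -> Prop),
    (forall i, open_set (U i)) ->
    (forall x, K x -> exists i, U i x) ->
    exists l : list I, forall x, K x -> exists i, List.In i l /\ U i x.

Definition compact_space : Prop := compact_set (fun _ => True).

Definition continuous (f : X -> X) : Prop :=
  forall x eps, 0 < eps -> exists delta, 0 < delta /\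
    forall y, d x y < delta -> d (f x) (f y) < eps.

Definition homeomorphism (f g : X -> X) : Prop :=
  continuous f /\ continuous g /\
  (forall x, g (f x) = x) /\ (forall x, f (g x) = x).

Definition zpow (f g : X -> X) (k : Z) : X -> X :=
  match k with
  | Z0 => fun x => x
  | Zpos p => Nat.iter (Pos.to_nat p) f
  | Zneg p => Nat.iter (Pos.to_nat p) g
  end.

Definition tends0_Z (u : Z -> R) : Prop :=
  forall eps, 0 < eps -> exists N : Z,
    forall k : Z, (N <= Z.abs k)%Z -> Rabs (u k) <= eps.

Definition L_shadowing (f g : X -> X) : Prop :=
  forall eps, 0 < eps -> exists delta, 0 < delta /\
    forall xs : Z -> X,
      (forall k, d (f (xs k)) (xs (k + 1)%Z) <= delta) ->
      tends0_Z (fun k => d (f (xs k)) (xs (k + 1)%Z)) ->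
      exists z, (forall k, d (zpow f g k z) (xs k) <= eps) /\
                tends0_Z (fun k => d (zpow f g k z) (xs k)).

Definition periodic_pseudo_orbit_through (f : X -> X) (eps : R) (x y : X) : Prop :=
  exists (m : nat) (p : nat -> X),
    (1 <= m)%nat /\
    (forall k, p (k + m)%nat = p k) /\
    (forall k, d (f (p k)) (p (S k)) < eps) /\
    (exists i, p i = x) /\ (exists j, p j = y).

Definition chain_recurrent_class (f : X -> X) (x : X) : X -> Prop :=
  fun y => forall eps, 0 < eps -> periodic_pseudo_orbit_through f eps x y.

Definition image (f : X -> X) (A : X -> Prop) : X -> Prop :=
  fun y => exists x, A x /\ f x = y.

Definition rel_open (K U : X -> Prop) : Prop :=
  (forall x, U x -> K x) /\
  forall x, U x -> exists eps, 0 < eps /\ forall y, K y -> d x y < eps -> U y.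

Definition top_mixing_on (F : X -> X) (K : X -> Prop) : Prop :=
  forall U V : X -> Prop, rel_open K U -> rel_open K V ->
    (exists u, U u) -> (exists v, V v) ->
    exists N : nat, forall k, (N <= k)%nat ->
      exists x, U x /\ V (Nat.iter k F x).

Definition two_sided_limit_shadowing_on (F G : X -> X) (K : X -> Prop) : Prop :=
  forall ys : Z -> X, (forall k, K (ys k)) ->
    tends0_Z (fun k => d (F (ys k)) (ys (k + 1)%Z)) ->
    exists y, K y /\ tends0_Z (fun k => d (zpow F G k y) (ys k)).

End MetricDefs.

(* Main.v *)
Require Import Defs.
From Stdlib Require Import Reals ZArith Lia Lra Arith Classical.
Open Scope R_scope.

Local Open Scope nat_scope.

Lemma Smul (S : nat -> Prop) : (forall a b, S a -> S b -> S (a + b)) ->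
  forall q x y, S x -> S y -> S (q * y + x).
Proof. intros Hadd q. induction q; intros x y Hx Hy; simpl; auto.
  rewrite <- Nat.add_assoc. apply Hadd; auto. Qed.

Lemma nat_min (D : nat -> Prop) : (exists m, D m) -> exists P, D P /\ forall p, D p -> P <= p.
Proof.
  intros [m Hm]. revert Hm. induction m as [m IH] using lt_wf_ind. intros Hm.
  destruct (classic (exists p, p < m /\ D p)) as [[p [Hp Dp]]|Hn].
  - apply (IH p Hp Dp).
  - exists m. split; auto. intros p Dp. destruct (le_lt_dec m p); auto.
    exfalso. apply Hn. exists p. auto.
Qed.

Lemma semigroup (S : nat -> Prop) :
  (forall a b, S a -> S b -> S (a + b)) -> (forall a, S a -> 1 <= a) -> (exists a, S a) ->
  exists P, 1 <= P /\ (forall a, S a -> Nat.divide P a) /\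
    (exists a b, S a /\ S b /\ a = b + P) /\
    (exists M, forall m, M <= m -> Nat.divide P m -> S m).
Proof.
  intros Hadd Hpos [a0 Ha0].
  set (D := fun p => 1 <= p /\ exists a b, S a /\ S b /\ a = b + p).
  destruct (nat_min D) as [P [[HP1 [a' [b' [Ha' [Hb' Eab]]]]] Hmin]].
  { exists a0. split. apply Hpos; auto. exists (a0 + a0), a0. repeat split; auto. }
  assert (Hdiv : forall a, S a -> Nat.divide P a).
  { intros a Ha. pose proof (Nat.div_mod_eq a P) as Ea.
    pose proof (Nat.mod_upper_bound a P ltac:(lia)) as Hr.
    set (q := a / P) in *. set (r := a mod P) in *.
    destruct (Nat.eq_dec r 0) as [Er|Er].
    - exists q. lia.
    - exfalso. assert (D r).
      { split. lia. exists (q * b' + (a + b')), (q * a' + b'). repeat split.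
        apply (Smul S Hadd); auto. apply (Smul S Hadd); auto. nia. }
      specialize (Hmin r H). lia. }
  exists P. split; auto. split; auto. split. exists a', b'. auto.
  destruct (Hdiv b' Hb') as [t Et].
  assert (Ht : 1 <= t) by (pose proof (Hpos b' Hb'); nia).
  exists (t * t * P). intros m Hm [k Ek].
  assert (Hk : t * t <= k) by nia.
  pose proof (Nat.div_mod_eq k t) as Ek2.
  pose proof (Nat.mod_upper_bound k t ltac:(lia)) as Hx.
  set (s := k / t) in *. set (x := k mod t) in *.
  assert (Hs : t <= s) by nia.
  assert (E : m = x * a' + ((s - x - 1) * b' + b')).
  { replace (s - x - 1) with (s - x - 1) by lia.
    assert (s = (s - x - 1) + x + 1) as Es by lia. nia. }
  rewrite E. apply (Smul S Hadd); auto. apply (Smul S Hadd); auto.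
Qed.

Local Open Scope R_scope.
Section Main.
Context {X : Type} (d : X -> X -> R) (f g : X -> X).
Hypothesis Hm : is_metric d.
Hypothesis Hh : homeomorphism d f g.

Lemma dpos x y : 0 <= d x y. Proof. apply Hm. Qed.
Lemma dxx x : d x x = 0. Proof. apply Hm; reflexivity. Qed.
Lemma dsym x y : d x y = d y x. Proof. apply Hm. Qed.
Lemma dtri x y z : d x z <= d x y + d y z. Proof. apply Hm. Qed.
Lemma gf x : g (f x) = x. Proof. apply Hh. Qed.
Lemma fg x : f (g x) = x. Proof. apply Hh. Qed.
Lemma fcont : continuous d f. Proof. apply Hh. Qed.
Lemma gcont : continuous d g. Proof. apply Hh. Qed.

Lemma iter_f_comm k x : f (Nat.iter k f x) = Nat.iter k f (f x).
Proof. change (Nat.iter (S k) f x = Nat.iter k f (f x)). apply Nat.iter_succ_r. Qed.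

Lemma iter_gf k x : Nat.iter k g (Nat.iter k f x) = x.
Proof. induction k; auto. rewrite (Nat.iter_succ_r k X g).
  change (Nat.iter (S k) f x) with (f (Nat.iter k f x)). rewrite gf. exact IHk. Qed.
Lemma iter_fg k x : Nat.iter k f (Nat.iter k g x) = x.
Proof. induction k; auto. rewrite (Nat.iter_succ_r k X f).
  change (Nat.iter (S k) g x) with (g (Nat.iter k g x)). rewrite fg. exact IHk. Qed.

Lemma iter_mul (h : X -> X) n m x : Nat.iter m (Nat.iter n h) x = Nat.iter (n*m) h x.
Proof.
  induction m; simpl. rewrite Nat.mul_0_r; auto.
  replace (n * S m)%nat with (n + n*m)%nat by lia. rewrite Nat.iter_add, IHm; auto.
Qed.

Lemma zpow_nat (F G : X -> X) m x : zpow F G (Z.of_nat m) x = Nat.iter m F x.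
Proof. destruct m; simpl; auto. rewrite SuccNat2Pos.id_succ; auto. Qed.
Lemma zpow_opp_nat (F G : X -> X) m x : zpow F G (- Z.of_nat m) x = Nat.iter m G x.
Proof. destruct m; simpl; auto. rewrite SuccNat2Pos.id_succ; auto. Qed.

Lemma Z_cases (k : Z) : exists m, k = Z.of_nat m \/ k = (- Z.of_nat (S m))%Z.
Proof.
  destruct (Z_le_gt_dec 0 k).
  - exists (Z.to_nat k). left. lia.
  - exists (Z.to_nat (- k - 1)). right. lia.
Qed.

Lemma zpow_succ k x : f (zpow f g k x) = zpow f g (k + 1) x.
Proof.
  destruct (Z_cases k) as [m [-> | ->]].
  - replace (Z.of_nat m + 1)%Z with (Z.of_nat (S m)) by lia.
    rewrite !zpow_nat. reflexivity.
  - replace (- Z.of_nat (S m) + 1)%Z with (- Z.of_nat m)%Z by lia.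
    rewrite !zpow_opp_nat. simpl. apply fg.
Qed.

Lemma zpow_mul n k x :
  zpow (Nat.iter n f) (Nat.iter n g) k x = zpow f g (Z.of_nat n * k) x.
Proof.
  destruct (Z_cases k) as [m [-> | ->]].
  - rewrite <- Nat2Z.inj_mul, !zpow_nat, iter_mul. auto.
  - rewrite Z.mul_opp_r, <- Nat2Z.inj_mul, !zpow_opp_nat, iter_mul. auto.
Qed.

Definition chain (e : R) (a b : X) (L : nat) : Prop :=
  exists p : nat -> X, p 0%nat = a /\ p L = b /\
    forall k, (k < L)%nat -> d (f (p k)) (p (S k)) < e.

Lemma chain_refl e a : chain e a a 0.
Proof. exists (fun _ => a). repeat split; auto. intros; lia. Qed.

Lemma chain_step e a b : d (f a) b < e -> chain e a b 1.
Proof.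
  intros H. exists (fun k => match k with O => a | _ => b end).
  repeat split; auto. intros k Hk. assert (k = 0%nat) by lia. subst. auto.
Qed.

Lemma chain_app' e a b c L1 L2 : chain e a b L1 -> chain e b c L2 ->
  exists p : nat -> X, p 0%nat = a /\ p (L1 + L2)%nat = c /\
    (forall k, (k < L1 + L2)%nat -> d (f (p k)) (p (S k)) < e) /\ p L1 = b.
Proof.
  intros [p1 [H0 [H1 H2]]] [p2 [K0 [K1 K2]]].
  exists (fun k => if le_lt_dec k L1 then p1 k else p2 (k - L1)%nat).
  refine (conj _ (conj _ (conj _ _))).
  4: { destruct (le_lt_dec L1 L1); auto; lia. }
  - destruct (le_lt_dec 0 L1); auto; lia.
  - destruct (le_lt_dec (L1 + L2) L1).
    + assert (E : (L1 + L2)%nat = L1) by lia. rewrite E, H1, <- K0.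
      assert (L2 = 0%nat) as E2 by lia. rewrite <- K1, E2. auto.
    + rewrite <- K1. f_equal. lia.
  - intros k Hk. destruct (le_lt_dec k L1); destruct (le_lt_dec (S k) L1).
    + apply H2; lia.
    + assert (k = L1) as E by lia. rewrite E, H1, <- K0.
      replace (S L1 - L1)%nat with 1%nat by lia. apply K2; lia.
    + lia.
    + replace (S k - L1)%nat with (S (k - L1)) by lia. apply K2; lia.
Qed.

Lemma chain_app e a b c L1 L2 : chain e a b L1 -> chain e b c L2 -> chain e a c (L1 + L2).
Proof. intros H1 H2. destruct (chain_app' _ _ _ _ _ _ H1 H2) as [p [? [? [? ?]]]]. exists p; auto. Qed.

Lemma chain_mono e e' a b L : e <= e' -> chain e a b L -> chain e' a b L.
Proof.
  intros He [p [H0 [H1 H2]]]. exists p. repeat split; auto.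
  intros k Hk. specialize (H2 k Hk). lra.
Qed.

Lemma chain_orbit e a k : 0 < e -> chain e a (Nat.iter k f a) k.
Proof.
  intros He. exists (fun j => Nat.iter j f a). repeat split; auto.
  intros j _. simpl. rewrite dxx. auto.
Qed.

Lemma chain_pos_len e a b L : chain e a b L -> a <> b -> (1 <= L)%nat.
Proof. intros [p [H0 [H1 _]]] Hab. destruct L; [congruence | lia]. Qed.


Definition CCl (x0 y : X) : Prop := forall e, 0 < e ->
  (exists L, (1 <= L)%nat /\ chain e x0 y L) /\ (exists L, (1 <= L)%nat /\ chain e y x0 L).

Lemma seg_chain e (p : nat -> X) : (forall k, d (f (p k)) (p (S k)) < e) ->
  forall a b, (a <= b)%nat -> chain e (p a) (p b) (b - a).
Proof.
  intros Hs a b Hab. exists (fun k => p (a + k)%nat). repeat split.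
  - f_equal; lia.
  - f_equal; lia.
  - intros k _. replace (a + S k)%nat with (S (a + k)) by lia. apply Hs.
Qed.

Lemma crc_iff x0 y : chain_recurrent_class d f x0 y <-> CCl x0 y.
Proof.
  split.
  - intros H e He. destruct (H e He) as [m [p [Hm1 [Hper [Hstep [[i Hi] [j Hj]]]]]]].
    assert (Hpm : forall t k, p (k + t * m)%nat = p k).
    { induction t; intros k. f_equal; lia.
      replace (k + S t * m)%nat with ((k + t * m) + m)%nat by lia. rewrite Hper. auto. }
    split.
    + exists (j + S i * m - i)%nat. split. nia.
      rewrite <- Hi, <- Hj, <- (Hpm (S i) j). apply seg_chain; auto. nia.
    + exists (i + S j * m - j)%nat. split. nia.
      rewrite <- Hi, <- Hj, <- (Hpm (S j) i). apply seg_chain; auto. nia.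
  - intros H e He. destruct (H e He) as [[L1 [HL1 C1]] [L2 [HL2 C2]]].
    destruct (chain_app' _ _ _ _ _ _ C1 C2) as [p [P0 [PL [Ps PM]]]].
    set (m := (L1 + L2)%nat).
    exists m, (fun k => p (k mod m)%nat). assert (Hm0 : m <> 0%nat) by lia.
    repeat split.
    + lia.
    + intros k. f_equal. replace (k + m)%nat with (k + 1 * m)%nat by lia.
      apply Nat.Div0.mod_add.
    + intros k. pose proof (Nat.mod_upper_bound k m Hm0) as Hr.
      destruct (Nat.eq_dec (S (k mod m)) m) as [E|E].
      * assert (Hz : (S k) mod m = 0%nat).
        { symmetry. apply (Nat.mod_unique _ _ (S (k / m))). lia.
          pose proof (Nat.div_mod_eq k m). nia. }
        rewrite Hz, P0. rewrite <- PL. assert (Ps' := Ps (k mod m)%nat ltac:(lia)).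
        rewrite E in Ps'. exact Ps'.
      * assert (Hz : (S k) mod m = S (k mod m)).
        { symmetry. apply (Nat.mod_unique _ _ (k / m)). lia.
          pose proof (Nat.div_mod_eq k m). nia. }
        rewrite Hz. apply Ps. lia.
    + exists 0%nat. rewrite Nat.Div0.mod_0_l. auto.
    + exists L1. rewrite Nat.mod_small by lia. auto.
Qed.

Lemma chain_first e a b L : chain e a b L -> (1 <= L)%nat ->
  exists c, d (f a) c < e /\ chain e c b (L - 1).
Proof.
  intros [p [P0 [PL Ps]]] HL. exists (p 1%nat). split.
  - rewrite <- P0. apply Ps. lia.
  - exists (fun k => p (S k)). repeat split; auto. rewrite <- PL. f_equal. lia.
    intros k Hk. apply Ps. lia.
Qed.

Lemma chain_last e a b L : chain e a b L -> (1 <= L)%nat ->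
  exists c, chain e a c (L - 1) /\ d (f c) b < e.
Proof.
  intros [p [P0 [PL Ps]]] HL. exists (p (L - 1)%nat). split.
  - exists p. repeat split; auto. intros k Hk. apply Ps. lia.
  - rewrite <- PL. replace L with (S (L - 1)) at 2 by lia. apply Ps. lia.
Qed.

Lemma ccl_long x0 y : CCl x0 y -> forall e, 0 < e ->
  (exists L, (2 <= L)%nat /\ chain e x0 y L) /\ (exists L, (2 <= L)%nat /\ chain e y x0 L).
Proof.
  intros H e He. destruct (H e He) as [[L1 [H1 C1]] [L2 [H2 C2]]]. split.
  - exists (L1 + (L2 + L1))%nat. split. lia.
    apply (chain_app _ _ _ _ _ _ C1). apply (chain_app _ _ _ _ _ _ C2 C1).
  - exists (L2 + (L1 + L2))%nat. split. lia.
    apply (chain_app _ _ _ _ _ _ C2). apply (chain_app _ _ _ _ _ _ C1 C2).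
Qed.

Lemma ccl_f x0 y : CCl x0 y -> CCl x0 (f y).
Proof.
  intros H e He.
  destruct (fcont (f y) (e/2)) as [dl [Hdl Hc]]. lra.
  set (eta := Rmin (e/2) dl).
  assert (Heta : 0 < eta) by (apply Rmin_pos; lra).
  assert (E1 : eta <= e/2) by (apply Rmin_l).
  assert (E2 : eta <= dl) by (apply Rmin_r).
  destruct (ccl_long _ _ H eta Heta) as [[L1 [H1 C1]] [L2 [H2 C2]]]. split.
  - exists (L1 + 1)%nat. split. lia. apply chain_app with y.
    + apply (chain_mono eta); auto. lra.
    + apply chain_step. rewrite dxx. auto.
  - destruct (chain_first _ _ _ _ C2) as [c1 [S1 R1]]. lia.
    destruct (chain_first _ _ _ _ R1) as [c2 [S2 R2]]. lia.
    exists (1 + (L2 - 1 - 1))%nat. split. lia. apply chain_app with c2.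
    + apply chain_step. assert (d (f (f y)) (f c1) < e/2).
      { apply Hc. lra. }
      pose proof (dtri (f (f y)) (f c1) c2). lra.
    + apply (chain_mono eta); auto. lra.
Qed.

Lemma ccl_g x0 y : CCl x0 y -> CCl x0 (g y).
Proof.
  intros H e He.
  destruct (gcont y (e/2)) as [dl [Hdl Hc]]. lra.
  set (eta := Rmin (e/2) dl).
  assert (Heta : 0 < eta) by (apply Rmin_pos; lra).
  assert (E1 : eta <= e/2) by (apply Rmin_l).
  assert (E2 : eta <= dl) by (apply Rmin_r).
  destruct (ccl_long _ _ H eta Heta) as [[L1 [H1 C1]] [L2 [H2 C2]]]. split.
  - destruct (chain_last _ _ _ _ C1) as [c1 [R1 S1]]. lia.
    destruct (chain_last _ _ _ _ R1) as [c2 [R2 S2]]. lia.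
    exists (L1 - 1 - 1 + 1)%nat. split. lia. apply chain_app with c2.
    + apply (chain_mono eta); auto. lra.
    + apply chain_step. assert (d (g y) (g (f c1)) < e/2).
      { apply Hc. rewrite dsym. lra. }
      rewrite gf in H0. pose proof (dtri (f c2) c1 (g y)). rewrite (dsym c1) in H3. lra.
  - exists (1 + L2)%nat. split. lia. apply chain_app with y.
    + apply chain_step. rewrite fg, dxx. auto.
    + apply (chain_mono eta); auto. lra.
Qed.

Lemma ccl_iter_f x0 y k : CCl x0 y -> CCl x0 (Nat.iter k f y).
Proof. intros H. induction k; simpl; auto. apply ccl_f; auto. Qed.
Lemma ccl_iter_g x0 y k : CCl x0 y -> CCl x0 (Nat.iter k g y).
Proof. intros H. induction k; simpl; auto. apply ccl_g; auto. Qed.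
Lemma ccl_zpow x0 y k : CCl x0 y -> CCl x0 (zpow f g k y).
Proof.
  intros H. destruct (Z_cases k) as [m [-> | ->]].
  rewrite zpow_nat; apply ccl_iter_f; auto.
  rewrite zpow_opp_nat; apply ccl_iter_g; auto.
Qed.

Lemma ccl_closed x0 z : (forall r, 0 < r -> exists y, CCl x0 y /\ d z y < r) -> CCl x0 z.
Proof.
  intros H e He.
  destruct (fcont z (e/2)) as [dl [Hdl Hc]]. lra.
  destruct (H (Rmin (e/2) dl)) as [y [Hy Hzy]]. apply Rmin_pos; lra.
  assert (E1 := Rmin_l (e/2) dl). assert (E2 := Rmin_r (e/2) dl).
  destruct (Hy (e/2) ltac:(lra)) as [[L1 [H1 C1]] [L2 [H2 C2]]]. split.
  - destruct (chain_last _ _ _ _ C1) as [c [R S]]. lia.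
    exists (L1 - 1 + 1)%nat. split. lia. apply chain_app with c.
    + apply (chain_mono (e/2)); auto. lra.
    + apply chain_step. pose proof (dtri (f c) y z). rewrite (dsym y z) in H0. lra.
  - destruct (chain_first _ _ _ _ C2) as [c [S R]]. lia.
    exists (1 + (L2 - 1))%nat. split. lia. apply chain_app with c.
    + apply chain_step. assert (d (f z) (f y) < e/2) by (apply Hc; lra).
      pose proof (dtri (f z) (f y) c). lra.
    + apply (chain_mono (e/2)); auto. lra.
Qed.

Lemma Rabs_d x y : Rabs (d x y) = d x y.
Proof. apply Rabs_pos_eq, dpos. Qed.

Lemma ccl_asym x0 z (xs : Z -> X) (K : Z) :
  (forall k, (K <= Z.abs k)%Z -> CCl x0 (xs k)) ->
  tends0_Z (fun k => d (f (xs k)) (xs (k + 1)%Z)) ->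
  tends0_Z (fun k => d (zpow f g k z) (xs k)) ->
  CCl x0 z.
Proof.
  intros HC He Hz e Hep.
  destruct (He (e/4) ltac:(lra)) as [N1 HN1].
  destruct (Hz (e/4) ltac:(lra)) as [N2 HN2].
  set (j := Z.to_nat (Z.max K (Z.max N1 N2))).
  split.
  -
    set (k := (- Z.of_nat (S (S j)))%Z).
    assert (Hk1 : (K <= Z.abs k)%Z) by (unfold k, j; lia).
    destruct (HC k Hk1 e Hep) as [[L1 [HL1 C1]] _].
    exists (L1 + 1 + S j)%nat. split. lia.
    apply chain_app with (Nat.iter (S j) g z).
    + apply chain_app with (xs k); auto. apply chain_step.
      assert (E : (k + 1)%Z = (- Z.of_nat (S j))%Z) by (unfold k; lia).
      assert (A1 := HN1 k ltac:(unfold k, j; lia)). cbv beta in A1.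
      assert (A2 := HN2 (k+1)%Z ltac:(rewrite E; unfold j; lia)). cbv beta in A2.
      rewrite Rabs_d in A1, A2. rewrite E, zpow_opp_nat in A2. rewrite E in A1.
      pose proof (dtri (f (xs k)) (xs (- Z.of_nat (S j))%Z) (Nat.iter (S j) g z)).
      rewrite (dsym (Nat.iter (S j) g z)) in A2. lra.
    + pattern z at 2. rewrite <- (iter_fg (S j) z). apply chain_orbit. auto.
  - set (k := Z.of_nat (S j)).
    assert (Hk1 : (K <= Z.abs k)%Z) by (unfold k, j; lia).
    destruct (HC k Hk1 e Hep) as [_ [L1 [HL1 C1]]].
    exists (j + 1 + L1)%nat. split. lia.
    apply chain_app with (xs k); auto.
    apply chain_app with (Nat.iter j f z). apply chain_orbit; auto.
    apply chain_step.
    assert (A2 := HN2 k ltac:(unfold k, j; lia)). cbv beta in A2.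
    rewrite Rabs_d in A2. unfold k in A2 |- *. rewrite zpow_nat in A2.
    change (f (Nat.iter j f z)) with (Nat.iter (S j) f z). lra.
Qed.

Lemma closed_compact (Hc : compact_space d) (K : X -> Prop) :
  (forall z, (forall r, 0 < r -> exists y, K y /\ d z y < r) -> K z) ->
  compact_set d K.
Proof.
  intros Hcl I U HU Hcov.
  set (U' := fun (o : option I) (x : X) => match o with Some i => U i x | None => ~ K x end).
  destruct (Hc (option I) U') as [l' Hl'].
  - intros [i|]; simpl. apply HU.
    intros x Hx. apply NNPP. intros Hn.
    apply Hx, Hcl. intros r Hr. apply NNPP. intros Hn2. apply Hn.
    exists r. split; auto. intros y Hy Ky. apply Hn2. exists y; auto.
  - intros x _. destruct (classic (K x)) as [Kx|Kx].
    + destruct (Hcov x Kx) as [i Hi]. exists (Some i). auto.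
    + exists None. auto.
  - exists (List.flat_map (fun o => match o with Some i => List.cons i List.nil | None => List.nil end) l').
    intros x Kx. destruct (Hl' x Logic.I) as [[i|] [Hin Hx]].
    + exists i. split; auto. apply List.in_flat_map. exists (Some i). simpl; auto.
    + simpl in Hx. contradiction.
Qed.

Section Tails.
Variables (a b : X) (p : nat -> X) (L : nat).
Definition tails (k : Z) : X :=
  if (k <? 0)%Z then zpow f g k a
  else if (k <=? Z.of_nat L)%Z then p (Z.to_nat k) else zpow f g (k - Z.of_nat L) b.

Hypothesis Hp0 : p 0%nat = a.
Hypothesis HpL : p L = b.

Lemma tails_nat j : (j <= L)%nat -> tails (Z.of_nat j) = p j.
Proof.
  intros Hj. unfold tails. destruct (Z.ltb_spec (Z.of_nat j) 0). lia.
  destruct (Z.leb_spec (Z.of_nat j) (Z.of_nat L)). rewrite Nat2Z.id; auto. lia.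
Qed.

Lemma tails_exact k : (k < 0 \/ Z.of_nat L <= k)%Z -> f (tails k) = tails (k + 1).
Proof.
  intros Hk. unfold tails.
  destruct (Z.ltb_spec k 0); destruct (Z.ltb_spec (k+1) 0).
  - apply zpow_succ.
  - assert (k = -1)%Z by lia. subst k. simpl.
    destruct (Z.leb_spec 0 (Z.of_nat L)). simpl. rewrite fg. auto. lia.
  - lia.
  - destruct (Z.leb_spec k (Z.of_nat L)); destruct (Z.leb_spec (k+1) (Z.of_nat L)).
    + lia.
    + assert (k = Z.of_nat L) by lia. subst k. rewrite Nat2Z.id, HpL.
      replace (Z.of_nat L + 1 - Z.of_nat L)%Z with 1%Z by lia. reflexivity.
    + lia.
    + rewrite zpow_succ. f_equal. lia.
Qed.

Lemma tails_err e : 0 < e -> (forall k, (k < L)%nat -> d (f (p k)) (p (S k)) < e) ->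
  forall k, d (f (tails k)) (tails (k + 1)) < e.
Proof.
  intros He Hs k. destruct (Z_lt_le_dec k 0) as [H|H].
  - rewrite tails_exact by lia. rewrite dxx; auto.
  - destruct (Z_lt_le_dec k (Z.of_nat L)) as [H2|H2].
    + replace k with (Z.of_nat (Z.to_nat k)) by lia.
      replace (Z.of_nat (Z.to_nat k) + 1)%Z with (Z.of_nat (S (Z.to_nat k))) by lia.
      rewrite !tails_nat by lia. apply Hs. lia.
    + rewrite tails_exact by lia. rewrite dxx; auto.
Qed.

Lemma tails_tends0 : tends0_Z (fun k => d (f (tails k)) (tails (k + 1))).
Proof.
  intros e He. exists (Z.of_nat L + 1)%Z. intros k Hk.
  rewrite tails_exact by lia. rewrite dxx, Rabs_R0. lra.
Qed.

Lemma tails_C x0 : CCl x0 a -> CCl x0 b -> forall k, (Z.of_nat L + 1 <= Z.abs k)%Z -> CCl x0 (tails k).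
Proof.
  intros Ha Hb k Hk. unfold tails.
  destruct (Z.ltb_spec k 0). apply ccl_zpow; auto.
  destruct (Z.leb_spec k (Z.of_nat L)). lia. apply ccl_zpow; auto.
Qed.
End Tails.

Lemma tails_neg a b p L k : (k < 0)%Z -> tails a b p L k = zpow f g k a.
Proof. intros H. unfold tails. destruct (Z.ltb_spec k 0); auto; lia. Qed.
Lemma tails_big a b p L k : (Z.of_nat L < k)%Z -> tails a b p L k = zpow f g (k - Z.of_nat L) b.
Proof. intros H. unfold tails. destruct (Z.ltb_spec k 0). lia.
  destruct (Z.leb_spec k (Z.of_nat L)); auto; lia. Qed.

Lemma iter_zpow m k z : Nat.iter m f (zpow f g k z) = zpow f g (k + Z.of_nat m) z.
Proof.
  induction m. simpl. f_equal. lia.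
  change (Nat.iter (S m) f (zpow f g k z)) with (f (Nat.iter m f (zpow f g k z))).
  rewrite IHm, zpow_succ. f_equal. lia.
Qed.

Lemma mod_eq_of_div n x y c : n <> 0%nat -> Nat.divide n (x + c) -> Nat.divide n (y + c) ->
  (x mod n = y mod n)%nat.
Proof.
  intros Hn [u Hu] [v Hv].
  transitivity ((x + v * n) mod n)%nat. rewrite Nat.Div0.mod_add; auto.
  transitivity ((y + u * n) mod n)%nat. f_equal. lia. rewrite Nat.Div0.mod_add; auto.
Qed.

Lemma mod_succ_inj n r i : (r < n)%nat -> (i < n)%nat -> ((r + 1) mod n = (i + 1) mod n)%nat -> r = i.
Proof.
  intros Hr Hi H.
  destruct (Nat.eq_dec (r + 1) n) as [E1|E1]; destruct (Nat.eq_dec (i + 1) n) as [E2|E2].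
  - lia.
  - rewrite E1, Nat.Div0.mod_same, Nat.mod_small in H by lia. lia.
  - rewrite E2, Nat.Div0.mod_same, Nat.mod_small in H by lia. lia.
  - rewrite !Nat.mod_small in H by lia. lia.
Qed.

Definition listmax {A} (l : list (A * nat)) : nat :=
  List.fold_right (fun p acc => Nat.max (snd p) acc) 0%nat l.
Lemma listmax_in {A} (l : list (A * nat)) p : List.In p l -> (snd p <= listmax l)%nat.
Proof. induction l; simpl; intros H; [contradiction|]. destruct H as [->|H]. lia.
  specialize (IHl H). lia. Qed.

Section Core.
Variables (x0 : X) (d0 : R) (n : nat).
Hypothesis Hcomp : compact_space d.
Hypothesis HsL : L_shadowing d f g.
Hypothesis Hx0 : CCl x0 x0.
Hypothesis Hd0 : 0 < d0.
Hypothesis Hsh0 : forall xs : Z -> X,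
      (forall k, d (f (xs k)) (xs (k + 1)%Z) <= d0) ->
      tends0_Z (fun k => d (f (xs k)) (xs (k + 1)%Z)) ->
      exists z, tends0_Z (fun k => d (zpow f g k z) (xs k)).

Definition Scyc (e : R) (m : nat) : Prop := (1 <= m)%nat /\ chain e x0 x0 m.

Lemma Scyc_add e a b : Scyc e a -> Scyc e b -> Scyc e (a + b).
Proof. intros [H1 C1] [H2 C2]. split. lia. eapply chain_app; eauto. Qed.
Lemma Scyc_ne e : 0 < e -> exists a, Scyc e a.
Proof. intros He. destruct (Hx0 e He) as [[L [HL CL]] _]. exists L. split; auto. Qed.

Lemma Qdiv eta Q : 0 < eta -> (forall a, Scyc eta a -> Nat.divide Q a) ->
  forall L, Scyc d0 L -> Nat.divide Q L.
Proof.
  intros Heta HQ L [HL [p [P0 [PL Ps]]]].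
  set (xs := tails x0 x0 p L).
  destruct (Hsh0 xs) as [z Hz].
  { intros k. apply Rlt_le. apply tails_err; auto. }
  { apply tails_tends0; auto. }
  destruct (Hz (eta/2) ltac:(lra)) as [N HN].
  set (K := (L + Z.to_nat N)%nat).
  set (w1 := Nat.iter (S K) g x0).
  set (w2 := Nat.iter (S K - L) f x0).
  assert (Cw1 : CCl x0 w1) by (apply ccl_iter_g; auto).
  assert (Cw2 : CCl x0 w2) by (apply ccl_iter_f; auto).
  assert (Hmid : chain eta w1 w2 (1 + (K + K) + 1)).
  { apply chain_app with (zpow f g (Z.of_nat K) z).
    apply chain_app with (zpow f g (- Z.of_nat K) z).
    - apply chain_step.
      assert (E1 : f w1 = xs (- Z.of_nat K)%Z).
      { unfold xs, w1. rewrite tails_neg by lia. rewrite zpow_opp_nat.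
        change (Nat.iter (S K) g x0) with (g (Nat.iter K g x0)). apply fg. }
      rewrite E1. assert (A := HN (- Z.of_nat K)%Z ltac:(unfold K; lia)).
      cbv beta in A. rewrite Rabs_d, dsym in A. lra.
    - replace (zpow f g (Z.of_nat K) z) with (Nat.iter (K + K) f (zpow f g (- Z.of_nat K) z)).
      apply chain_orbit; auto. rewrite iter_zpow. f_equal. lia.
    - apply chain_step. rewrite zpow_succ.
      assert (E2 : w2 = xs (Z.of_nat K + 1)%Z).
      { unfold xs, w2. rewrite tails_big by (unfold K; lia).
        replace (Z.of_nat K + 1 - Z.of_nat L)%Z with (Z.of_nat (S K - L)) by (unfold K; lia).
        rewrite zpow_nat. auto. }
      rewrite E2. assert (A := HN (Z.of_nat K + 1)%Z ltac:(unfold K; lia)).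
      cbv beta in A. rewrite Rabs_d in A. lra. }
  destruct (Cw1 eta Heta) as [_ [c1 [Hc1 Cc1]]].
  destruct (Cw2 eta Heta) as [_ [c2 [Hc2 Cc2]]].
  destruct (Hx0 eta Heta) as [_ _].
  destruct (Cw1 eta Heta) as [[a [Ha Ca]] _].
  assert (D1 : Nat.divide Q (a + S K)).
  { apply HQ. split. lia. apply chain_app with w1; auto.
    unfold w1. pattern x0 at 2. rewrite <- (iter_fg (S K) x0). apply chain_orbit; auto. }
  assert (D2 : Nat.divide Q ((S K - L) + c2)).
  { apply HQ. split. lia. apply chain_app with w2; auto. apply chain_orbit; auto. }
  assert (D3 : Nat.divide Q (a + (1 + (K + K) + 1) + c2)).
  { apply HQ. split. lia. apply chain_app with w2; auto. apply chain_app with w1; auto. }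
  replace (a + (1 + (K + K) + 1) + c2)%nat with (((a + S K) + ((S K - L) + c2)) + L)%nat in D3
    by (unfold K; lia).
  apply (Nat.divide_add_cancel_r _ _ _ (Nat.divide_add_r _ _ _ D1 D2)) in D3. auto.
Qed.


Hypothesis Hn1 : (1 <= n)%nat.
Hypothesis Hndiv : forall a, Scyc d0 a -> Nat.divide n a.
Hypothesis Hnab : exists a b, Scyc d0 a /\ Scyc d0 b /\ a = (b + n)%nat.

Lemma Scyc_mono e a : e <= d0 -> Scyc e a -> Scyc d0 a.
Proof. intros He [H1 H2]. split; auto. eapply chain_mono; eauto. Qed.

Lemma chain_mix eta : 0 < eta -> eta <= d0 ->
  exists M, forall m, (M <= m)%nat -> Nat.divide n m -> chain eta x0 x0 m.
Proof.
  intros He He2.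
  destruct (semigroup (Scyc eta)) as [P [HP1 [Pdiv [[a [b [Ha [Hb Eab]]]] [M0 HM0]]]]].
  apply Scyc_add. intros a Ha; apply Ha. apply Scyc_ne; auto.
  assert (E : P = n).
  { apply Nat.divide_antisym.
    - destruct Hnab as [a' [b' [Ha' [Hb' E']]]].
      pose proof (Qdiv eta P He Pdiv a' Ha'). pose proof (Qdiv eta P He Pdiv b' Hb').
      replace n with (a' - b')%nat by lia. apply Nat.divide_sub_r; auto.
    - replace P with (a - b)%nat by lia. apply Nat.divide_sub_r; apply Hndiv;
      eapply Scyc_mono; eauto. }
  subst P. exists M0. intros m Hm0 Hd. apply HM0; auto.
Qed.

Definition Cs (i : nat) (y : X) : Prop :=
  CCl x0 y /\ exists L, chain d0 x0 y L /\ (L mod n)%nat = i.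

Lemma idx0 y L1 L2 : CCl x0 y -> chain d0 x0 y L1 -> chain d0 x0 y L2 -> (L1 mod n = L2 mod n)%nat.
Proof.
  intros Hy C1 C2. destruct (Hy d0 Hd0) as [_ [c [Hc Cc]]].
  apply (mod_eq_of_div n L1 L2 c). lia.
  apply Hndiv. split. lia. eapply chain_app; eauto.
  apply Hndiv. split. lia. eapply chain_app; eauto.
Qed.

Lemma cs_C i y : Cs i y -> CCl x0 y.
Proof. intros [H _]; auto. Qed.

Lemma cs_lt i y : Cs i y -> (i < n)%nat.
Proof. intros [_ [L [_ <-]]]. apply Nat.mod_upper_bound. lia. Qed.

Lemma cs_cover y : CCl x0 y -> exists i, (i < n)%nat /\ Cs i y.
Proof.
  intros Hy. destruct (Hy d0 Hd0) as [[L [_ CL]] _].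
  exists (L mod n)%nat. split. apply Nat.mod_upper_bound; lia.
  split; auto. exists L; auto.
Qed.

Lemma cs_disj i j y : Cs i y -> Cs j y -> i = j.
Proof.
  intros [Hy [L1 [C1 <-]]] [_ [L2 [C2 <-]]]. apply (idx0 y); auto.
Qed.

Lemma cs_close i y z : Cs i y -> CCl x0 z -> d y z < d0 / 2 -> Cs i z.
Proof.
  intros [Hy [L [CL EL]]] Hz Hyz. split; auto.
  destruct (Hy (d0/2) ltac:(lra)) as [[L' [HL' CL']] _].
  destruct (chain_last _ _ _ _ CL' HL') as [c [Rc Sc]].
  exists (L' - 1 + 1)%nat. split.
  - apply chain_app with c. eapply chain_mono; eauto; lra.
    apply chain_step. pose proof (dtri (f c) y z). lra.
  - replace (L' - 1 + 1)%nat with L' by lia. rewrite <- EL.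
    apply (idx0 y); auto. eapply chain_mono; eauto; lra.
Qed.

Lemma cs_closed_pt i z : (forall r, 0 < r -> exists y, Cs i y /\ d z y < r) -> Cs i z.
Proof.
  intros H.
  assert (Hz : CCl x0 z).
  { apply ccl_closed. intros r Hr. destruct (H r Hr) as [y [[Hy _] Hzy]]. eauto. }
  destruct (H (d0/2) ltac:(lra)) as [y [Hy Hzy]].
  apply (cs_close i y); auto. rewrite dsym; auto.
Qed.

Lemma cs_compact i : compact_set d (Cs i).
Proof. apply closed_compact; auto. apply cs_closed_pt. Qed.

Lemma C_compact : compact_set d (CCl x0).
Proof. apply closed_compact; auto. apply ccl_closed. Qed.

Lemma cs_f i y : Cs i y -> Cs ((i + 1) mod n)%nat (f y).
Proof.
  intros [Hy [L [CL <-]]]. split. apply ccl_f; auto.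
  exists (L + 1)%nat. split. apply chain_app with y; auto. apply chain_step. rewrite dxx; auto.
  rewrite Nat.Div0.add_mod_idemp_l. auto.
Qed.

Lemma cs_f_inv i z : (i < n)%nat -> Cs ((i + 1) mod n)%nat z -> Cs i (g z).
Proof.
  intros Hi Hz. assert (Hgz : CCl x0 (g z)) by (apply ccl_g; apply Hz).
  destruct (cs_cover _ Hgz) as [j [Hj Cj]].
  assert (E : ((j + 1) mod n)%nat = ((i + 1) mod n)%nat).
  { apply (cs_disj _ _ z); auto. pose proof (cs_f _ _ Cj) as H. rewrite fg in H. auto. }
  apply mod_succ_inj in E; auto. subst; auto.
Qed.

Lemma cs_back i k z : CCl x0 z -> Cs i (Nat.iter (n * k) f z) -> Cs i z.
Proof.
  intros Hz [Hw [L [CL EL]]]. split; auto.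
  destruct (Hz d0 Hd0) as [[L' [_ CL']] _]. exists L'. split; auto.
  rewrite <- EL. rewrite <- (Nat.Div0.mod_add L' k n).
  apply (idx0 (Nat.iter (n * k) f z)); auto.
  replace (L' + k * n)%nat with (L' + n * k)%nat by lia.
  apply chain_app with z; auto. apply chain_orbit; auto.
Qed.

Lemma cs_fn i y : Cs i y -> Cs i (Nat.iter n f y).
Proof.
  intros [Hy [L [CL <-]]]. split. apply ccl_iter_f; auto.
  exists (L + n)%nat. split. apply chain_app with y; auto. apply chain_orbit; auto.
  replace (L + n)%nat with (L + 1 * n)%nat by lia. apply Nat.Div0.mod_add.
Qed.

Lemma cs_fn_inv i z : Cs i z -> Cs i (Nat.iter n g z).
Proof.
  intros Hz. apply (cs_back i 1). apply ccl_iter_g; apply Hz.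
  rewrite Nat.mul_1_r, iter_fg. auto.
Qed.

Lemma div_ab i u v a b : Cs i u -> Cs i v -> (1 <= a)%nat -> chain d0 u x0 a -> chain d0 x0 v b ->
  Nat.divide n (a + b).
Proof.
  intros [Hu [Lu [Cu Eu]]] [Hv [Lv [Cv Ev]]] Ha Ca Cb.
  assert (D : Nat.divide n (Lu + a)). { apply Hndiv. split. lia. eapply chain_app; eauto. }
  assert (Eb : (b mod n = Lv mod n)%nat) by (apply (idx0 v); auto).
  apply Nat.Lcm0.mod_divide. apply Nat.Lcm0.mod_divide in D.
  rewrite <- Nat.Div0.add_mod_idemp_r, Eb, Ev, <- Eu, Nat.Div0.add_mod_idemp_r.
  rewrite Nat.add_comm. auto.
Qed.


Lemma ub eta : 0 < eta -> exists A, forall y, CCl x0 y ->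
  (exists a, (1 <= a)%nat /\ (a <= A)%nat /\ chain eta y x0 a) /\
  (exists b, (b <= A)%nat /\ chain eta x0 y b).
Proof.
  intros He.
  pose proof C_compact as HCC. unfold compact_set in HCC.
  destruct (HCC (prod X nat) (fun p z => exists r, 0 < r /\ d (fst p) z < r /\
     forall w, d (fst p) w < r -> (1 <= snd p)%nat /\ chain eta w x0 (snd p))) as [l1 Hl1].
  { intros [y a] z [r [Hr [Hyz Hw]]]. simpl in *. exists (r - d y z). split. lra.
    intros w Hzw. exists r. split; [auto|split]; [pose proof (dtri y z w); lra | auto]. }
  { intros z Hz. destruct (Hz eta He) as [_ [a [Ha Ca]]].
    destruct (chain_first _ _ _ _ Ca Ha) as [c [Sc Rc]].
    destruct (fcont z (eta - d (f z) c)) as [dl [Hdl Hcd]]. lra.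
    exists (z, a). exists dl. simpl. rewrite dxx. split; [auto|split;[auto|]].
    intros w Hw. split; auto. replace a with (1 + (a - 1))%nat by lia.
    apply chain_app with c; auto. apply chain_step. specialize (Hcd w Hw).
    pose proof (dtri (f w) (f z) c). rewrite (dsym (f w) (f z)) in H. lra. }
  destruct (HCC (prod X nat) (fun p z => exists r, 0 < r /\ d (fst p) z < r /\
     forall w, d (fst p) w < r -> chain eta x0 w (snd p))) as [l2 Hl2].
  { intros [y a] z [r [Hr [Hyz Hw]]]. simpl in *. exists (r - d y z). split. lra.
    intros w Hzw. exists r. split; [auto|split]; [pose proof (dtri y z w); lra | auto]. }
  { intros z Hz. destruct (Hz eta He) as [[b [Hb Cb]] _].
    destruct (chain_last _ _ _ _ Cb Hb) as [c [Rc Sc]].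
    exists (z, b). exists (eta - d (f c) z). simpl. rewrite dxx. split; [lra|split;[lra|]].
    intros w Hw. replace b with (b - 1 + 1)%nat by lia.
    apply chain_app with c; auto. apply chain_step.
    pose proof (dtri (f c) z w). lra. }
  exists (listmax l1 + listmax l2)%nat. intros y Hy. split.
  - destruct (Hl1 y Hy) as [[y' a] [Hin [r [Hr [Hyr Hw]]]]].
    destruct (Hw y Hyr) as [Ha Ca]. exists a. repeat split; auto.
    pose proof (listmax_in _ _ Hin). simpl in *. lia.
  - destruct (Hl2 y Hy) as [[y' b] [Hin [r [Hr [Hyr Hw]]]]].
    exists b. split. pose proof (listmax_in _ _ Hin). simpl in *. lia. apply Hw; auto.
Qed.


Lemma mixing i : top_mixing_on d (Nat.iter n f) (Cs i).
Proof.
  intros U V [HUK HUo] [HVK HVo] [u Hu] [v Hv].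
  destruct (HUo u Hu) as [eu [Heu HUb]]. destruct (HVo v Hv) as [ev [Hev HVb]].
  set (eps := Rmin (Rmin eu ev) (d0/2) / 2).
  assert (Heps : 0 < eps).
  { unfold eps. assert (0 < Rmin (Rmin eu ev) (d0/2)) by (apply Rmin_pos; [apply Rmin_pos|]; lra). lra. }
  assert (E1 : eps < eu).
  { unfold eps. pose proof (Rmin_l (Rmin eu ev) (d0/2)). pose proof (Rmin_l eu ev). lra. }
  assert (E2 : eps < ev).
  { unfold eps. pose proof (Rmin_l (Rmin eu ev) (d0/2)). pose proof (Rmin_r eu ev). lra. }
  assert (E3 : eps < d0/2).
  { unfold eps. pose proof (Rmin_r (Rmin eu ev) (d0/2)). lra. }
  destruct (HsL eps Heps) as [dl [Hdl Hshd]].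
  set (eta := Rmin dl d0).
  assert (Heta : 0 < eta) by (apply Rmin_pos; lra).
  assert (F1 : eta <= dl) by apply Rmin_l. assert (F2 : eta <= d0) by apply Rmin_r.
  destruct (chain_mix eta Heta F2) as [M HM].
  assert (Cu := HUK u Hu). assert (Cv := HVK v Hv).
  destruct (cs_C _ _ Cu eta Heta) as [_ [a [Ha Ca]]].
  destruct (cs_C _ _ Cv eta Heta) as [[b [Hb Cb]] _].
  assert (Dab : Nat.divide n (a + b)).
  { apply (div_ab i u v); auto; eapply chain_mono; eauto. }
  exists (a + b + M)%nat. intros k Hk.
  set (m := (n * k - (a + b))%nat).
  assert (Hm1 : (M <= m)%nat) by (unfold m; nia).
  assert (Cm : chain eta x0 x0 m).
  { apply HM; auto. apply Nat.divide_sub_r; auto. exists k. lia. }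
  assert (Ctot : chain eta u v (n * k)).
  { replace (n * k)%nat with (a + m + b)%nat by (unfold m; nia).
    apply chain_app with x0; auto. apply chain_app with x0; auto. }
  destruct Ctot as [p [P0 [PL Ps]]].
  set (xs := tails u v p (n * k)).
  destruct (Hshd xs) as [z [Hzall Hzt]].
  { intros j. apply Rlt_le. apply Rlt_le_trans with eta; auto. apply tails_err; auto. }
  { apply tails_tends0; auto. }
  assert (Cz : CCl x0 z).
  { apply (ccl_asym x0 z xs (Z.of_nat (n * k) + 1)); auto.
    apply tails_C; auto; apply cs_C with i; auto. apply tails_tends0; auto. }
  assert (D1 : d u z <= eps).
  { specialize (Hzall 0%Z). unfold xs in Hzall.
    change 0%Z with (Z.of_nat 0) in Hzall. rewrite (tails_nat u v p (n * k) 0) in Hzall by lia. simpl in Hzall.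
    rewrite P0, dsym in Hzall. auto. }
  assert (D2 : d v (Nat.iter (n * k) f z) <= eps).
  { specialize (Hzall (Z.of_nat (n * k))). unfold xs in Hzall.
    rewrite (tails_nat u v p (n * k) (n * k)) in Hzall by lia.
    rewrite zpow_nat, PL, dsym in Hzall. auto. }
  exists z. split.
  - apply HUb. apply (cs_close i u z); auto. lra. lra.
  - rewrite iter_mul. apply HVb. apply (cs_close i v); auto. apply ccl_iter_f; auto. lra. lra.
Qed.


Definition ps (ys : Z -> X) (t : Z) : X :=
  Nat.iter (Z.to_nat (t mod Z.of_nat n)) f (ys (t / Z.of_nat n)%Z).

Lemma divmod_facts t : (t = Z.of_nat n * (t / Z.of_nat n) + t mod Z.of_nat n /\
   0 <= t mod Z.of_nat n < Z.of_nat n)%Z.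
Proof. split. apply Z.div_mod. lia. apply Z.mod_pos_bound. lia. Qed.

Lemma ps_mul ys k : ps ys (Z.of_nat n * k) = ys k.
Proof.
  unfold ps.
  rewrite <- (Z.div_unique_pos (Z.of_nat n * k) (Z.of_nat n) k 0) by lia.
  rewrite <- (Z.mod_unique_pos (Z.of_nat n * k) (Z.of_nat n) k 0) by lia. reflexivity.
Qed.

Lemma ps_step ys t : f (ps ys t) = ps ys (t + 1) \/
  (f (ps ys t) = Nat.iter n f (ys (t / Z.of_nat n)%Z) /\ ps ys (t + 1) = ys (t / Z.of_nat n + 1)%Z).
Proof.
  destruct (divmod_facts t) as [Et Hr].
  set (q := (t / Z.of_nat n)%Z) in *. set (r := (t mod Z.of_nat n)%Z) in *.
  unfold ps. fold q r.
  destruct (Z_lt_le_dec (r + 1) (Z.of_nat n)) as [H|H].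
  - left. rewrite <- (Z.div_unique_pos (t + 1) (Z.of_nat n) q (r + 1)) by lia.
    rewrite <- (Z.mod_unique_pos (t + 1) (Z.of_nat n) q (r + 1)) by lia.
    replace (Z.to_nat (r + 1)) with (S (Z.to_nat r)) by lia. reflexivity.
  - right. rewrite <- (Z.div_unique_pos (t + 1) (Z.of_nat n) (q + 1) 0) by lia.
    rewrite <- (Z.mod_unique_pos (t + 1) (Z.of_nat n) (q + 1) 0) by lia.
    split; auto. change (f (Nat.iter (Z.to_nat r) f (ys q))) with (Nat.iter (S (Z.to_nat r)) f (ys q)).
    f_equal. lia.
Qed.


Lemma tsls i : two_sided_limit_shadowing_on d (Nat.iter n f) (Nat.iter n g) (Cs i).
Proof.
  intros ys Hys Hyt.
  set (nz := Z.of_nat n). assert (Hnz : (1 <= nz)%Z) by (unfold nz; lia).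
  set (E := fun j => d (Nat.iter n f (ys j)) (ys (j + 1)%Z)).
  destruct (Hyt d0 Hd0) as [N1 HN1].
  destruct (ub d0 Hd0) as [A HA].
  destruct (chain_mix d0 Hd0 (Rle_refl _)) as [M HM].
  set (N := (Z.to_nat N1 + A + A + M + 1)%nat). set (NZ := Z.of_nat N).
  set (u := ys (- NZ)%Z). set (v := ys NZ).
  assert (Cu : Cs i u) by apply Hys. assert (Cv : Cs i v) by apply Hys.
  destruct (HA u (cs_C _ _ Cu)) as [[a [Ha1 [Ha2 Ca]]] _].
  destruct (HA v (cs_C _ _ Cv)) as [_ [b [Hb Cb]]].
  assert (Dab : Nat.divide n (a + b)) by (apply (div_ab i u v); auto).
  set (len := (n * (N + N))%nat).
  set (m := (len - (a + b))%nat).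
  assert (Hm1 : (M <= m)%nat) by (unfold m, len, N; nia).
  assert (Cm : chain d0 x0 x0 m).
  { apply HM; auto. apply Nat.divide_sub_r; auto. exists (N + N)%nat. unfold len. lia. }
  assert (Ctot : chain d0 u v len).
  { replace len with (a + m + b)%nat by (unfold m, len, N; nia).
    apply chain_app with x0; auto. apply chain_app with x0; auto. }
  destruct Ctot as [p [P0 [PL Ps]]].
  set (Bnd := (nz * NZ)%Z).
  assert (HBnd : (0 <= Bnd)%Z) by (unfold Bnd, NZ; lia).
  assert (Hlen : Z.of_nat len = (Bnd + Bnd)%Z) by (unfold len, Bnd, nz, NZ; lia).
  set (xs := fun t => if (Z.abs t <? Bnd)%Z then p (Z.to_nat (t + Bnd)) else ps ys t).
  assert (Xmid : forall t, (- Bnd <= t <= Bnd)%Z -> xs t = p (Z.to_nat (t + Bnd))).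
  { intros t Ht. unfold xs. destruct (Z.ltb_spec (Z.abs t) Bnd); auto.
    destruct (Z.eq_dec t (- Bnd)) as [->|Hne].
    - replace (- Bnd)%Z with (nz * (- NZ))%Z by (unfold Bnd; lia). rewrite ps_mul.
      replace (Z.to_nat (nz * - NZ + Bnd)) with 0%nat by (unfold Bnd; lia). rewrite P0. auto.
    - assert (t = Bnd) as -> by lia. unfold Bnd. rewrite ps_mul.
      replace (Z.to_nat (nz * NZ + nz * NZ)) with len by (unfold Bnd in Hlen; lia). rewrite PL. auto. }
  assert (Xout : forall t, (Bnd <= Z.abs t)%Z -> xs t = ps ys t).
  { intros t Ht. unfold xs. destruct (Z.ltb_spec (Z.abs t) Bnd); auto. lia. }
  assert (Xerr : forall t, (t < - Bnd \/ Bnd <= t)%Z ->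
     d (f (xs t)) (xs (t + 1)%Z) = 0 \/ d (f (xs t)) (xs (t + 1)%Z) = E (t / nz)%Z).
  { intros t Ht. rewrite !Xout by lia.
    destruct (ps_step ys t) as [H|[H1 H2]].
    - left. rewrite H. apply dxx.
    - right. rewrite H1, H2. reflexivity. }
  assert (Qbig : forall t K, (nz * K <= t)%Z -> (K <= t / nz)%Z).
  { intros t K Ht. destruct (divmod_facts t) as [Et Hr]. fold nz in Et, Hr. nia. }
  assert (Qsmall : forall t K, (t < - (nz * K))%Z -> (t / nz < - K)%Z).
  { intros t K Ht. destruct (divmod_facts t) as [Et Hr]. fold nz in Et, Hr. nia. }
  assert (Herr : forall t, d (f (xs t)) (xs (t + 1)%Z) <= d0).
  { intros t. destruct (Z_lt_le_dec t (- Bnd)) as [H|H].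
    - destruct (Xerr t (or_introl H)) as [-> | ->]. lra.
      assert (Q := Qsmall t NZ H). specialize (HN1 (t / nz)%Z ltac:(unfold NZ, N in Q; lia)).
      unfold E. rewrite Rabs_d in HN1. auto.
    - destruct (Z_lt_le_dec t Bnd) as [H2|H2].
      + rewrite !Xmid by lia. replace (Z.to_nat (t + 1 + Bnd)) with (S (Z.to_nat (t + Bnd))) by lia.
        apply Rlt_le. apply Ps. lia.
      + destruct (Xerr t (or_intror H2)) as [-> | ->]. lra.
        assert (Q := Qbig t NZ H2). specialize (HN1 (t / nz)%Z ltac:(unfold NZ, N in Q; lia)).
        unfold E. rewrite Rabs_d in HN1. auto. }
  assert (Htend : tends0_Z (fun t => d (f (xs t)) (xs (t + 1)%Z))).
  { intros eps Heps. destruct (Hyt eps Heps) as [N' HN'].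
    exists (nz * (NZ + Z.abs N' + 1))%Z. intros t Ht.
    assert (Hout : (t < - Bnd \/ Bnd <= t)%Z) by (unfold Bnd; nia).
    destruct (Xerr t Hout) as [-> | ->]. rewrite Rabs_R0; lra.
    apply HN'. destruct (Z_lt_le_dec t 0).
    - assert (Q := Qsmall t (NZ + Z.abs N' + 1 - 1)%Z ltac:(nia)). lia.
    - assert (Q := Qbig t (NZ + Z.abs N' + 1)%Z ltac:(lia)). lia. }
  destruct (Hsh0 xs Herr Htend) as [z Hz].
  assert (Cz : CCl x0 z).
  { apply (ccl_asym x0 z xs (Bnd + 1)); auto.
    intros t Ht. rewrite Xout by lia. unfold ps. apply ccl_iter_f. apply cs_C with i. apply Hys. }
  exists z. split.
  - destruct (Hz (d0/4) ltac:(lra)) as [N2 HN2].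
    set (kk := (N + Z.to_nat (Z.abs N2) + 1)%nat).
    assert (A1 := HN2 (nz * Z.of_nat kk)%Z ltac:(unfold kk; nia)). cbv beta in A1.
    rewrite Xout in A1 by (unfold Bnd, kk, NZ; nia). rewrite ps_mul, Rabs_d in A1.
    unfold nz in A1. rewrite <- Nat2Z.inj_mul, zpow_nat in A1.
    apply (cs_back i kk). auto. apply (cs_close i (ys (Z.of_nat kk))); auto.
    apply ccl_iter_f; auto. rewrite dsym. lra.
  - intros eps Heps. destruct (Hz eps Heps) as [N3 HN3].
    exists (NZ + Z.abs N3 + 1)%Z. intros k Hk.
    rewrite zpow_mul. fold nz.
    assert (A1 := HN3 (nz * k)%Z ltac:(nia)). cbv beta in A1.
    rewrite Xout in A1 by (unfold Bnd; nia). rewrite ps_mul in A1. auto.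
Qed.

End Core.
End Main.

Theorem theoremE (X : Type) (d : X -> X -> R) (f g : X -> X) (C : X -> Prop) :
  is_metric d -> compact_space d -> homeomorphism d f g ->
  L_shadowing d f g ->
  (exists x, forall y, C y <-> chain_recurrent_class d f x y) ->
  exists (n : nat) (Cs : nat -> X -> Prop),
    (1 <= n)%nat /\
    (forall i j, (i < n)%nat -> (j < n)%nat -> i <> j ->
       forall x, Cs i x -> Cs j x -> False) /\
    (forall i, (i < n)%nat -> compact_set d (Cs i)) /\
    (forall i, (i < n)%nat -> forall x, Cs i x -> C x) /\
    (forall i, (i < n)%nat -> forall y, image (Nat.iter n f) (Cs i) y <-> Cs i y) /\
    (forall x, C x <-> exists i, (i < n)%nat /\ Cs i x) /\
    (forall i, (i < n)%nat -> forall y, image f (Cs i) y <-> Cs ((i + 1) mod n)%nat y) /\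
    (forall i, (i < n)%nat ->
       top_mixing_on d (Nat.iter n f) (Cs i) /\
       two_sided_limit_shadowing_on d (Nat.iter n f) (Nat.iter n g) (Cs i)).
Proof.
  intros Hm Hc Hh HsL [x Hx].
  assert (HC : forall y, C y <-> CCl d f x y).
  { intros y. rewrite Hx. apply crc_iff. }
  destruct (classic (CCl d f x x)) as [Hx0 | Hnx].
  2: {
    assert (Hemp : forall y, ~ C y).
    { intros y Hy. apply Hnx. apply HC in Hy. intros e He.
      destruct (Hy e He) as [[L1 [H1 C1]] [L2 [H2 C2]]].
      split; exists (L1 + L2)%nat; split; try lia; eapply chain_app; eauto. }
    exists 1%nat, (fun _ _ => False).
    split. lia. split. intros; auto. split.
    { intros i _ I U _ _. exists List.nil. intros y []. }
    split. intros i _ y []. split.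
    { intros i _ y. split. intros [w [[] _]]. intros []. }
    split.
    { intros y. split. intros Hy. exfalso. apply (Hemp y Hy). intros [i [_ []]]. }
    split.
    { intros i _ y. split. intros [w [[] _]]. intros []. }
    intros i _. split.
    - intros U V [HUK _] _ [u Hu] _. destruct (HUK u Hu).
    - intros ys Hys _. destruct (Hys 0%Z). }
  destruct (HsL 1 Rlt_0_1) as [d0 [Hd0 Hsh]].
  assert (Hsh0 : forall xs : Z -> X,
      (forall k, d (f (xs k)) (xs (k + 1)%Z) <= d0) ->
      tends0_Z (fun k => d (f (xs k)) (xs (k + 1)%Z)) ->
      exists z, tends0_Z (fun k => d (zpow f g k z) (xs k))).
  { intros xs H1 H2. destruct (Hsh xs H1 H2) as [z [_ Hz]]. eauto. }
  destruct (semigroup (Scyc d f x d0)) as [n [Hn1 [Hndiv [Hnab _]]]].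
  { apply Scyc_add. }
  { intros a Ha; apply Ha. }
  { apply Scyc_ne; auto. }
  exists n, (Cs d f x d0 n).
  split; auto. split.
  { intros i j _ _ Hij y Hi Hj. apply Hij. eapply cs_disj; eauto. }
  split.
  { intros i _. eapply cs_compact; eauto. }
  split.
  { intros i _ y Hy. apply HC. eapply cs_C; eauto. }
  split.
  { intros i _ y. split.
    - intros [w [Hw <-]]. eapply cs_fn; eauto.
    - intros Hy. exists (Nat.iter n g y). split. eapply cs_fn_inv; eauto.
      eapply iter_fg; eauto. }
  split.
  { intros y. rewrite HC. split.
    - intros Hy. eapply cs_cover; eauto.
    - intros [i [_ Hi]]. eapply cs_C; eauto. }
  split.
  { intros i Hi y. split.
    - intros [w [Hw <-]]. eapply cs_f; eauto.
    - intros Hy. exists (g y). split. eapply cs_f_inv; eauto. eapply fg; eauto. }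
  intros i _. split.
  - eapply mixing; eauto.
  - eapply tsls; eauto.
Qed.
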